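(* For a probability measure $\mu$ on $(0,\infty)$ and real $p$, let $\mu_p:=\int_{(0,\infty)}x^{p-2}\,\mu(\mathrm{d}x)$, let $L_\mu(d):=\int_{(0,\infty)}\min\!\big(1,\tfrac{d}{x}\big)\,\mu(\mathrm{d}x)$ for $d>0$, and for $c\in(0,1)$ let $\delta_\mu$ denote the unique root $d\in(0,\infty)$ of $L_\mu(d)=c$. Then: (I) For any $c\in(0,\tfrac12]$ and any real $\mu_{3*}>0$, there exists a probability measure $\mu$ on $(0,\infty)$ with $\mu_3=\mu_{3*}$ and $\delta_\mu=c\,\mu_{3*}$. (II) For any $c\in(\tfrac12,1)$ and any real $\mu_{3*}>0$, $\mu_{1*}>0$ with $\mu_{3*}\mu_{1*}\ge1$, there exists a probability measure $\mu$ on $(0,\infty)$ with $\mu_3=\mu_{3*}$, $\mu_1=\mu_{1*}$, and $$\delta_\mu=\frac{\mu_{3*}-(2c-1)^2/\mu_{1*}}{4(1-c)}.$$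
   Context: $\mu_1=\int_{(0,\infty)}x^{-1}\,\mu(\mathrm{d}x)$ and $\mu_3=\int_{(0,\infty)}x\,\mu(\mathrm{d}x)$. For every probability measure $\mu$ on $(0,\infty)$ and $c\in(0,1)$ the equation $L_\mu(d)=c$ has a unique root in $(0,\infty)$. *)

(* Defs.v *)
From HB Require Import structures.
From mathcomp Require Import all_boot all_order all_algebra.
From mathcomp Require Import all_classical all_reals all_analysis.
Set Implicit Arguments. Unset Strict Implicit. Unset Printing Implicit Defensive.
Import Order.TTheory GRing.Theory Num.Theory.
Import numFieldNormedType.Exports.
Local Open Scope classical_set_scope.
Local Open Scope ring_scope.

(* A probability measure on (0,oo) is represented as a probability measure on
   the Borel sets of R that gives full mass to the open half-line ]0,+oo[. *)
Definition prob_on_pos (R : realType) (mu : probability R R) : Prop :=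
  mu `]0%R, +oo[%classic = 1%E.

Definition moment (R : realType) (mu : probability R R) (p : R) : \bar R :=
  (\int[mu]_(x in `]0%R, +oo[%classic) ((x `^ (p - 2))%:E))%E.

Definition Lfun (R : realType) (mu : probability R R) (d : R) : \bar R :=
  (\int[mu]_(x in `]0%R, +oo[%classic) ((Num.min 1 (d / x))%:E))%E.

(* delta_mu := the (unique) root d in (0,oo) of L_mu(d) = c
   (chosen via xget; the uniqueness is a standing fact of the paper). *)
Definition delta (R : realType) (mu : probability R R) (c : R) : R :=
  xget 0 [set d : R | 0 < d /\ Lfun mu d = c%:E].

(* Main.v *)
Require Import Defs.
From HB Require Import structures.
From mathcomp Require Import all_boot all_order all_algebra.
From mathcomp Require Import all_classical all_reals all_analysis measurable_realfun.
From mathcomp Require Import ring lra.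
Import Order.TTheory GRing.Theory Num.Theory.
Import numFieldNormedType.Exports.
Local Open Scope ring_scope.

Section S.
Local Open Scope classical_set_scope.
Context {R : realType}.

Definition mix0 (q r : {nonneg R}) (a b : R) :=
  measure_add (mscale q (@dirac _ R a R)) (mscale r (@dirac _ R b R)).

Definition mix (q r : {nonneg R}) (a b : R) : probability R R :=
  mnormalize (mix0 q r a b) (@dirac _ R 0 R).

Lemma mnorm1 (mu : {measure set R -> \bar R}) (P : probability R R) A :
  mu setT = 1%E -> mnormalize mu P A = mu A.
Proof.
move=> E1; rewrite /mnormalize E1 /=.
by rewrite onee_eq0 /= invr1 mule1.
Qed.

Lemma mixE (q r : {nonneg R}) a b : q%:num + r%:num = 1 ->
  forall A, mix q r a b A = mix0 q r a b A.
Proof.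
move=> qr A; apply: mnorm1.
rewrite /mix0; etransitivity; first exact: measure_addE.
transitivity ((q%:num)%:E * \d_a [set: R] + (r%:num)%:E * \d_b [set: R])%E; first by [].
by rewrite !diracT !mule1 -EFinD qr.
Qed.

Lemma mix_int (q r : {nonneg R}) (a b : R) (g : R -> R) : q%:num + r%:num = 1 ->
  0 < a -> 0 < b ->
  measurable_fun (`]0%R, +oo[%classic : set R) g -> (forall x, 0 < x -> 0 <= g x) ->
  (\int[mix q r a b]_(x in `]0%R, +oo[%classic) (g x)%:E =
   (q%:num * g a + r%:num * g b)%:E)%E.
Proof.
move=> qr a0 b0 mg g0.
have mD : measurable (`]0%R, +oo[%classic : set R) by [].
have mf : measurable_fun (`]0%R, +oo[%classic : set R) (EFin \o g) by exact/measurable_EFinP.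
have f0 : forall x, (`]0%R, +oo[%classic : set R) x -> (0 <= (g x)%:E)%E.
  by move=> x /=; rewrite in_itv /= andbT => x0; rewrite lee_fin g0.
rewrite (eq_measure_integral (mix0 q r a b)); last by move=> A _ _; exact: mixE.
rewrite ge0_integral_measure_add // !ge0_integral_mscale // !integral_dirac //.
rewrite !diracE !mem_set /= ?in_itv /= ?a0 ?b0 // !mul1e -!EFinM -EFinD //.
Qed.


Lemma mix_pos (q r : {nonneg R}) (a b : R) : q%:num + r%:num = 1 ->
  0 < a -> 0 < b -> prob_on_pos (mix q r a b).
Proof.
move=> qr a0 b0; rewrite /prob_on_pos.
transitivity (mix0 q r a b `]0%R, +oo[%classic); first exact: mixE.
rewrite /mix0; etransitivity; first exact: measure_addE.
transitivity ((q%:num)%:E * \d_a (`]0%R, +oo[%classic : set R)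
   + (r%:num)%:E * \d_b (`]0%R, +oo[%classic : set R))%E; first by [].
rewrite !diracE !mem_set /= ?in_itv /= ?a0 ?b0 // !mule1 -EFinD qr //.
Qed.

Lemma mix_moment (q r : {nonneg R}) (a b p : R) : q%:num + r%:num = 1 ->
  0 < a -> 0 < b ->
  moment (mix q r a b) p = (q%:num * a `^ (p - 2) + r%:num * b `^ (p - 2))%:E.
Proof.
move=> qr a0 b0; rewrite /moment; apply: (@mix_int _ _ _ _ (fun x => x `^ (p - 2))) => //.
- apply: measurable_funTS; exact: measurable_powR.
- by move=> x _; exact: powR_ge0.
Qed.

Lemma mix_L (q r : {nonneg R}) (a b d : R) : q%:num + r%:num = 1 ->
  0 < a -> 0 < b -> 0 <= d ->
  Defs.Lfun (mix q r a b) d = (q%:num * Num.min 1 (d / a) + r%:num * Num.min 1 (d / b))%:E.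
Proof.
move=> qr a0 b0 d0; rewrite /Defs.Lfun; apply: (@mix_int _ _ _ _ (fun x => Num.min 1 (d / x))) => //.
- apply: measurable_minr; first exact: measurable_cst.
  apply: (@eq_measurable_fun _ _ _ _ _ (fun x => d * x `^ (-1))).
    move=> x; rewrite inE /= in_itv /= andbT => x0.
    by rewrite powR_inv1 // ltW.
  apply: measurable_funM; first exact: measurable_cst.
  apply: measurable_funTS; exact: measurable_powR.
- move=> x x0; rewrite le_min ler01 /=; apply: divr_ge0 => //; exact: ltW.
Qed.

Lemma minR (x : R) : (1 <= x /\ Num.min 1 x = 1) \/ (x < 1 /\ Num.min 1 x = x).
Proof.
have [h|h] := leP 1 x; first by left; split => //; rewrite min_l.
by right; split => //; rewrite min_r // ltW.
Qed.

Lemma Lmono (q a b d1 d2 : R) : 0 <= q < 1 -> 0 < a -> a <= b ->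
  0 < d1 -> d1 < d2 ->
  q * Num.min 1 (d1 / a) + (1 - q) * Num.min 1 (d1 / b) < 1 ->
  q * Num.min 1 (d1 / a) + (1 - q) * Num.min 1 (d1 / b) <
  q * Num.min 1 (d2 / a) + (1 - q) * Num.min 1 (d2 / b).
Proof.
move=> /andP[q0 q1] a0 ab d10 d12 Lt1.
have b0 : 0 < b by apply: lt_le_trans ab.
have ea : d1 / a < d2 / a by rewrite ltr_pM2r // invr_gt0.
have eb : d1 / b < d2 / b by rewrite ltr_pM2r // invr_gt0.
have eab : d1 / b <= d1 / a.
  by rewrite ler_pM2l // lef_pV2 // posrE.
have hA : Num.min 1 (d1 / a) <= Num.min 1 (d2 / a).
  rewrite le_min !ge_min lexx /=; by rewrite (ltW ea) orbT.
have hb1 : d1 / b < 1.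
  rewrite ltNge; apply/negP => hb.
  have ha1 : 1 <= d1 / a by exact: le_trans hb eab.
  move: Lt1; rewrite (min_l hb) (min_l ha1) !mulr1.
  by rewrite addrC subrK ltxx.
have hB : Num.min 1 (d1 / b) < Num.min 1 (d2 / b).
  by rewrite min_r ?ltW // lt_min hb1 eb.
have q1' : 0 < 1 - q by rewrite subr_gt0.
nra.
Qed.

Lemma Luniq (q a b c d1 d2 : R) : 0 <= q < 1 -> 0 < a -> a <= b -> c < 1 ->
  0 < d1 -> 0 < d2 ->
  q * Num.min 1 (d1 / a) + (1 - q) * Num.min 1 (d1 / b) = c ->
  q * Num.min 1 (d2 / a) + (1 - q) * Num.min 1 (d2 / b) = c -> d1 = d2.
Proof.
move=> hq a0 ab c1 d10 d20 e1 e2.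
have [h|h|//] := ltgtP d1 d2.
- have := @Lmono q a b d1 d2 hq a0 ab d10 h; rewrite e1 e2 => /(_ c1); rewrite ltxx //.
- have := @Lmono q a b d2 d1 hq a0 ab d20 h; rewrite e1 e2 => /(_ c1); rewrite ltxx //.
Qed.

End S.

Lemma efin_inj (R : realType) (x y : R) : x%:E = y%:E -> x = y.
Proof. by case. Qed.

Theorem proposition1 (R : realType) :
  (forall (c mu3 : R), 0 < c -> c <= 2^-1 -> 0 < mu3 ->
     exists mu : probability R R,
       prob_on_pos mu /\ moment mu 3 = mu3%:E /\ delta mu c = c * mu3) /\
  (forall (c mu3 mu1 : R), 2^-1 < c -> c < 1 -> 0 < mu3 -> 0 < mu1 ->
     1 <= mu3 * mu1 ->
     exists mu : probability R R,
       prob_on_pos mu /\ moment mu 3 = mu3%:E /\ moment mu 1 = mu1%:E /\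
       delta mu c = (mu3 - (2 * c - 1) ^+ 2 / mu1) / (4 * (1 - c))).
Proof.
have e32 : (3 - 2 : R) = 1 by lra.
have e12 : (1 - 2 : R) = -1 by lra.
split.
- move=> c m c0 c12 m0.
  have c1 : c < 1 by apply: le_lt_trans c12 _; lra.
  pose q0 : {nonneg R} := NngNum (lexx (0 : R)).
  pose q1 : {nonneg R} := NngNum (@ler01 R).
  have hq : q0%:num + q1%:num = 1 by rewrite /= add0r.
  exists (mix q0 q1 m m); split; first exact: mix_pos.
  split.
    by rewrite mix_moment // e32 powRr1 ?ltW //= mul0r add0r mul1r.
  rewrite /delta; apply: xget_unique.
    split; first by rewrite mulr_gt0.
    rewrite mix_L // ?mulr_ge0 ?ltW //= mul0r add0r mul1r mulfK ?gt_eqF //.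
    by rewrite min_r // ltW.
  move=> y [y0 Ly]; move: Ly; rewrite mix_L // ?ltW // => /efin_inj /= Ly.
  have Lc : 0 * Num.min 1 (c * m / m) + 1 * Num.min 1 (c * m / m) = c.
    by rewrite mul0r add0r mul1r mulfK ?gt_eqF // min_r // ltW.
  apply: (@Luniq _ 0 m m c) => //.
  + by rewrite lexx ltr01.
  + by rewrite mulr_gt0.
  + by rewrite subr0.
  + by rewrite subr0.
- move=> c m k c12 c1 m0 k0 mk.
  have k0' : k != 0 by rewrite gt_eqF.
  have c0' : 1 - c != 0 by rewrite gt_eqF // subr_gt0.
  have hc : 0 < 1 - c by rewrite subr_gt0.
  have hc2 : 0 < 2 * c - 1 by lra.
  set L := (2 * c - 1) / k.
  set D := (m - (2 * c - 1) ^+ 2 / k) / (4 * (1 - c)).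
  have HL : L * k = 2 * c - 1 by rewrite /L mulfVK.
  have L0 : 0 < L by rewrite /L divr_gt0.
  have HD : 4 * (1 - c) * D * k = m * k - (2 * c - 1) ^+ 2.
    by rewrite /D; field; rewrite k0' /= c0'.
  have hm : m = L * (2 * c - 1) + 4 * (1 - c) * D.
    by rewrite /L /D; field; rewrite k0' /= c0'.
  clearbody L D.
  have hDk : c <= D * k by nra.
  have DL : 0 < D - L by nra.
  set b := 2 * D - L.
  have b0 : 0 < b by rewrite /b; lra.
  have Lb : L <= b by rewrite /b; lra.
  have DL0 : D - L != 0 by rewrite gt_eqF.
  have hb : b = 2 * D - L by [].
  clearbody b.
  set s := (1 - c) * b / (D - L).
  have hs : s * (D - L) = (1 - c) * b by rewrite /s mulfVK.
  have s0 : 0 <= s by rewrite /s divr_ge0 // ?mulr_ge0 // ltW.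
  have s1 : s <= 1.
    rewrite /s ler_pdivrMr // mul1r hb; nra.
  have q0 : 0 <= 1 - s by rewrite subr_ge0.
  have sp : 0 < s by rewrite /s divr_gt0 // mulr_gt0.
  clearbody s.
  pose qq : {nonneg R} := NngNum q0.
  pose ss : {nonneg R} := NngNum s0.
  have hq : qq%:num + ss%:num = 1 by rewrite /= subrK.
  exists (mix qq ss L b); split; first exact: mix_pos.
  split.
    rewrite mix_moment // e32 !powRr1 ?ltW //= ; congr (_%:E).
    rewrite [RHS]hm (_ : (1 - s) * L + s * b = L + 2 * (s * (D - L)) + (s * (b - (2 * D - L)))); last by ring.
    by rewrite hs hb subrr mulr0 addr0; ring.
  split.
    rewrite mix_moment // e12 !powR_inv1 ?ltW //= ; congr (_%:E).
    have Lb0 : L * b != 0 by rewrite mulf_neq0 ?gt_eqF.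
    apply: (mulIf Lb0).
    have -> : ((1 - s) * L^-1 + s * b^-1) * (L * b) = (1 - s) * b + s * L.
      by field; rewrite !gt_eqF.
    rewrite (_ : k * (L * b) = (L * k) * b); last by ring.
    rewrite HL (_ : (1 - s) * b + s * L = b - 2 * (s * (D - L)) + s * (2 * (D - L) - (b - L))); last by ring.
    by rewrite hs hb (_ : 2 * (D - L) - (2 * D - L - L) = 0) ?mulr0 ?addr0; ring.
  have D0 : 0 < D by lra.
  have LD : 1 <= D / L by rewrite ler_pdivlMr // mul1r; lra.
  have Db : D / b < 1 by rewrite ltr_pdivrMr // mul1r hb; lra.
  have LDc : (1 - s) * Num.min 1 (D / L) + s * Num.min 1 (D / b) = c.
    rewrite (min_l LD) (min_r (ltW Db)) mulr1.
    have b0' : b != 0 by rewrite gt_eqF.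
    apply: (mulIf b0').
    rewrite (_ : (1 - s + s * (D / b)) * b = b - s * (D - L) + s * ((D - L) - (b - D))); last by field.
    by rewrite hs hb (_ : D - L - (2 * D - L - D) = 0) ?mulr0 ?addr0; ring.
  rewrite /delta; apply: xget_unique.
    split => //; rewrite mix_L // ?ltW //=; congr (_%:E); exact: LDc.
  move=> y [y0 Ly]; move: Ly; rewrite mix_L // ?ltW // => /efin_inj /= Ly.
  apply: (@Luniq _ (1 - s) L b c) => //.
  + by rewrite q0 /= ltrBlDl ltrDr.
  + by rewrite (_ : 1 - (1 - s) = s) //; ring.
  + by rewrite (_ : 1 - (1 - s) = s) //; ring.
Qed.
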